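(* There exist binary-input discrete memoryless channels $W$ and $V$ with a common finite output alphabet $\mathcal{Y}$, both symmetrized by the same involutive permutation of $\mathcal{Y}$, such that $$C(W^+,V^+)+C(W^-,V^-) > 2\,C(W,V).$$
   Context: A binary-input discrete memoryless channel (B-DMC) $W:\{0,1\}\to\mathcal{Y}$ is given by transition probabilities $W(y|x)$. Two B-DMCs $W,V$ with the same output alphabet are symmetrized by the same permutation if there is a permutation $\pi$ of $\mathcal{Y}$ with $\pi=\pi^{-1}$ such that $W(y|0)=W(\pi(y)|1)$ and $V(y|0)=V(\pi(y)|1)$ for all $y$. Mismatched capacity: for B-DMCs $W,V$ with the same output alphabet, $C(W,V)$ is the supremum of rates $R$ such that for every $\epsilon>0$ and all sufficiently large $n$ there is a codebook $\{\mathbf{x}(1),\dots,\mathbf{x}(M)\}\subset\{0,1\}^n$ with $\frac{\log M}{n}>R$ whose maximal error probability over the memoryless channel $W$ is less than $\epsilon$ when decoded with the mismatched decoder for $V$: on receiving $\mathbf{y}$ it outputs the unique $i$ with $\prod_k V(y_k|x_k(i)) > \prod_k V(y_k|x_k(j))$ for all $j\ne i$ (i.e. $d(\mathbf x(i),\mathbf y)<d(\mathbf x(j),\mathbf y)$ for the additive metric $d(x,y)=-\log V(y|x)$), and declares an erasure (error) if no such $i$ exists. Polar transforms: from a B-DMC $W:\{0,1\}\to\mathcal{Y}$ one defines $W^-:\{0,1\}\to\mathcal{Y}^2$ and $W^+:\{0,1\}\to\mathcal{Y}^2\times\mathbb{F}_2$ by $W^-(y_1y_2|u_1)=\sum_{u_2\in\mathbb{F}_2}\tfrac12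 W(y_1|u_1\oplus u_2)W(y_2|u_2)$ and $W^+(y_1y_2u_1|u_2)=\tfrac12 W(y_1|u_1\oplus u_2)W(y_2|u_2)$; $V^\pm$ are defined in the same way from $V$. *)

(* Defs.v *)
From HB Require Import structures.
From mathcomp Require Import all_boot all_order all_algebra.
From mathcomp Require Import all_classical all_reals all_analysis.
Set Implicit Arguments. Unset Strict Implicit. Unset Printing Implicit Defensive.
Import Order.TTheory GRing.Theory Num.Theory.
Local Open Scope ring_scope.
Local Open Scope classical_set_scope.

Section Defs.
Variable R : realType.

(* A binary-input DMC W : {0,1} -> Y, with W x y = W(y|x); false = 0, true = 1. *)
Definition bdmc (Y : finType) (W : bool -> Y -> R) : Prop :=
  (forall x y, 0 <= W x y) /\ (forall x, \sum_(y : Y) W x y = 1).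

Definition symmetrized_by_same_perm (Y : finType) (W V : bool -> Y -> R) : Prop :=
  exists pi : Y -> Y, involutive pi /\
    (forall y, W false y = W true (pi y)) /\ (forall y, V false y = V true (pi y)).

Definition polar_minus (Y : finType) (W : bool -> Y -> R) :
  bool -> (Y * Y)%type -> R :=
  fun u1 y => \sum_(u2 : bool) 2^-1 * W (u1 (+) u2) y.1 * W u2 y.2.

(* W^+(y1 y2 u1 | u2) = 1/2 W(y1|u1 xor u2) W(y2|u2); output ((y1, y2), u1) *)
Definition polar_plus (Y : finType) (W : bool -> Y -> R) :
  bool -> (Y * Y * bool)%type -> R :=
  fun u2 y => 2^-1 * W (y.2 (+) u2) y.1.1 * W u2 y.1.2.

Definition chan_n (Y : finType) (n : nat) (W : bool -> Y -> R)
  (x : {ffun 'I_n -> bool}) (y : {ffun 'I_n -> Y}) : R :=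
  \prod_(k < n) W (x k) (y k).

Definition mm_decodes_to (Y : finType) (n M : nat) (V : bool -> Y -> R)
  (c : 'I_M -> {ffun 'I_n -> bool}) (y : {ffun 'I_n -> Y}) (i : 'I_M) : bool :=
  [forall j : 'I_M, (j != i) ==> (chan_n V (c j) y < chan_n V (c i) y)].

Definition mm_error_prob (Y : finType) (n M : nat) (W V : bool -> Y -> R)
  (c : 'I_M -> {ffun 'I_n -> bool}) (i : 'I_M) : R :=
  \sum_(y : {ffun 'I_n -> Y} | ~~ mm_decodes_to V c y i) chan_n W (c i) y.

Definition mm_achievable (Y : finType) (W V : bool -> Y -> R) (r : R) : Prop :=
  forall eps : R, 0 < eps -> exists N : nat, forall n : nat, (N <= n)%N ->
    exists (M : nat) (c : 'I_M -> {ffun 'I_n -> bool}),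
      (0 < M)%N /\ r < ln (M%:R) / n%:R /\
      (forall i : 'I_M, mm_error_prob W V c i < eps).

Definition mm_capacity (Y : finType) (W V : bool -> Y -> R) : R :=
  sup [set r : R | mm_achievable W V r].

End Defs.

(* Main.v *)
Require Import Defs.
From HB Require Import structures.
From mathcomp Require Import all_boot all_order all_algebra.
From mathcomp Require Import all_classical all_reals all_analysis.
From mathcomp Require Import lra.
Import Order.TTheory GRing.Theory Num.Theory.
Local Open Scope ring_scope.
Local Open Scope classical_set_scope.

Section Gen.
Variable R : realType.
Variable Y : finType.
Implicit Types W V : bool -> Y -> R.

Lemma neg_ach W V (r : R) : r < 0 -> mm_achievable W V r.
Proof.
move=> r0 eps eps0; exists 0%N => n _.
exists 1%N, (fun _ => [ffun _ => false]); split => //; split.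
  by rewrite ln1 mul0r.
move=> i; rewrite /mm_error_prob big_pred0 // => y.
apply/negbF/forallP => j; apply/implyP; by rewrite !ord1.
Qed.


Lemma chan_sum n W (x : {ffun 'I_n -> bool}) : bdmc W ->
  \sum_(y : {ffun 'I_n -> Y}) chan_n W x y = 1.
Proof.
move=> [_ hs]; rewrite /chan_n.
rewrite -(bigA_distr_bigA (fun k (b : Y) => W (x k) b)).
by rewrite big1 // => k _; rewrite hs.
Qed.

Lemma ach_le_ln2 W V (r : R) : bdmc W -> mm_achievable W V r -> r <= ln 2.
Proof.
move=> hW /(_ 1 ltr01) [N hN].
have [M [c [M0 [hr he]]]] := hN N.+1 (leqnSn N).
suff hM : (M <= 2 ^ N.+1)%N.
  apply: (le_trans (ltW hr)).
  have -> : ln 2 = ln ((2 ^ N.+1)%:R) / N.+1%:R :> R.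
    rewrite natrX lnXn ?ltr0n //. rewrite -[ln 2 *+ _]mulr_natr mulfK ?pnatr_eq0 //.
  have h0 : (0:R) <= N.+1%:R^-1 by rewrite invr_ge0 ler0n.
  apply: (ler_wpM2r h0).
  rewrite ler_ln ?posrE ?ltr0n ?expn_gt0 //.
  by rewrite ler_nat.
have [[i [j [ij cij]]]|nex] := pselect (exists i j : 'I_M, i != j /\ c i = c j).
  have := he i; rewrite /mm_error_prob.
  rewrite (eq_bigl xpredT) ?chan_sum ?ltxx // => y /=.
  apply/negP => /forallP /(_ j) /implyP; rewrite eq_sym ij cij ltxx.
  by move=> /(_ isT).
have injc : injective c.
  move=> i j cij; apply/eqP; apply/negPn/negP => ij; apply: nex.
  by exists i, j.
have := @leq_card _ _ c injc; rewrite card_ffun card_bool card_ord.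
by rewrite card_ord.
Qed.

Lemma ach_ub W V : bdmc W -> has_ubound [set r | mm_achievable W V r].
Proof. by move=> hW; exists (ln 2) => r; apply: ach_le_ln2. Qed.

Lemma cap_ge0 W V : bdmc W -> 0 <= mm_capacity W V.
Proof.
move=> hW; rewrite /mm_capacity.
have ubS := @ach_ub W V hW.
rewrite leNgt; apply/negP => s0.
have : [set r | mm_achievable W V r] (sup [set r | mm_achievable W V r] / 2).
  by apply: neg_ach; rewrite pmulr_llt0.
move/(ub_le_sup ubS) => h; lra.
Qed.

Lemma cap_ge W V r : bdmc W -> mm_achievable W V r -> r <= mm_capacity W V.
Proof. by move=> hW hr; apply: (ub_le_sup (@ach_ub W V hW)). Qed.

End Gen.
Section Conc.
Variable R : realType.

Definition Wc (x y : bool) : R := if x == y then 1 else 0.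
Definition Vc (x y : bool) : R := if x == y then 0 else 1.
Definition Wm (u : bool) (y : bool * bool) : R :=
  if (y.1 (+) y.2) == u then 2^-1 else 0.

Lemma sum_pair (A B : finType) (F : A * B -> R) :
  \sum_(p : A * B) F p = \sum_(a : A) \sum_(b : B) F (a, b).
Proof. by rewrite pair_bigA; apply: eq_bigr => -[]. Qed.

Lemma bdmc_Wc : bdmc Wc.
Proof. by split; [move=> [] [] /=; rewrite /Wc /= | move=> []; rewrite big_bool /Wc /=]; lra. Qed.

Lemma bdmc_Vc : bdmc Vc.
Proof. by split; [move=> [] [] /=; rewrite /Vc /= | move=> []; rewrite big_bool /Vc /=]; lra. Qed.

Lemma bdmc_plus : bdmc (polar_plus Wc).
Proof.
split.
  by move=> [] [[[] []] []]; rewrite /polar_plus /Wc /=; lra.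
by move=> []; rewrite !sum_pair !big_bool /polar_plus /Wc /=; lra.
Qed.

Lemma minusW : polar_minus Wc = Wm.
Proof.
by apply/funext => u; apply/funext => -[a b]; rewrite /polar_minus big_bool /Wm /Wc;
  case: u; case: a; case: b => /=; lra.
Qed.

Lemma minusV : polar_minus Vc = Wm.
Proof.
by apply/funext => u; apply/funext => -[a b]; rewrite /polar_minus big_bool /Wm /Vc;
  case: u; case: a; case: b => /=; lra.
Qed.

Lemma bdmc_Wm : bdmc Wm.
Proof.
split.
  by move=> [] [[] []]; rewrite /Wm /=; lra.
by move=> []; rewrite !sum_pair !big_bool /Wm /=; lra.
Qed.

Lemma sym : symmetrized_by_same_perm Wc Vc.
Proof. by exists negb; split; [exact: negbK | split => -[]]. Qed.

Lemma chan_ge0 (Y : finType) n (W : bool -> Y -> R) x y : bdmc W -> 0 <= chan_n W (n := n) x y.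
Proof. by case=> h _; apply: prodr_ge0 => k _; apply: h. Qed.

Lemma capWV : mm_capacity Wc Vc <= 0.
Proof.
apply: ge_sup; first by exists (-1); apply: neg_ach; lra.
move=> r hr.
have [N hN] := hr 1 ltr01.
have [M [c [M0 [hr' he]]]] := hN N.+1 (leqnSn N).
case: M c M0 hr' he => [|[|M]] c // _ hr' he.
  by move: hr'; rewrite ln1 mul0r => /ltW.
have := he ord0; rewrite /mm_error_prob (bigD1 (c ord0)) /=; last first.
  apply/negP => /forallP /(_ ord_max) /implyP /(_ isT).
  rewrite {2}/chan_n big_ord_recl /Vc eqxx mul0r.
  by rewrite ltNge chan_ge0 //; exact: bdmc_Vc.
rewrite {1}/chan_n big1 => [|k _]; last by rewrite /Wc eqxx.
rewrite ltNge lerDl sumr_ge0 // => y _.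
by apply: chan_ge0; exact: bdmc_Wc.
Qed.

Lemma achm : mm_achievable (polar_minus Wc) (polar_minus Vc) (ln 2 / 2).
Proof.
rewrite minusW minusV => eps eps0; exists 1%N => n n1.
exists #|{: {ffun 'I_n -> bool}}|, enum_val.
have cE : #|{: {ffun 'I_n -> bool}}| = (2 ^ n)%N by rewrite card_ffun card_bool card_ord.
split; first by rewrite cE expn_gt0.
split.
  rewrite cE natrX lnXn ?ltr0n // -[ln 2 *+ _]mulr_natr mulfK ?pnatr_eq0 -?lt0n //.
  have : 0 < ln (2 : R) by apply: ln_gt0; lra.
  lra.
move=> i; rewrite /mm_error_prob big1 // => y nd.
apply/eqP; apply: contraNT nd => nz.
apply/forallP => j; apply/implyP => ji.
have cji : enum_val j <> enum_val i :> {ffun 'I_n -> bool}.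
  by move/enum_val_inj => e; move: ji; rewrite e eqxx.
have /existsP [k hk] : [exists k, enum_val j k != enum_val i k :> bool].
  case: (boolP [exists k, enum_val j k != enum_val i k :> bool]) => // /existsPn h.
  case: cji; apply/ffunP => k.
  by have := h k; rewrite negbK => /eqP.
have gi : 0 <= chan_n Wm (enum_val i) y by exact: (@chan_ge0 _ n Wm (enum_val i) y bdmc_Wm).
have -> : chan_n Wm (enum_val j) y = 0.
  rewrite /chan_n (bigD1 k) //= /Wm.
  case: (boolP ((y k).1 (+) (y k).2 == enum_val i k)) => hi.
    rewrite (_ : (_ == enum_val j k) = false) ?mul0r //.
    by apply: contraNF hk => /eqP <-.
  by move: nz; rewrite /chan_n (bigD1 k) //= /Wm (negbTE hi) mul0r eqxx.
by rewrite lt_def nz.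
Qed.

End Conc.

Lemma fin_ineq (R : realType) (a b c d : R) :
  a <= 0 -> 0 <= b -> d / 2 <= c -> 0 < d -> 2 * a < b + c.
Proof. move=> *; lra. Qed.

Theorem mainTheorem1 (R : realType) :
  exists (Y : finType) (W V : bool -> Y -> R),
    bdmc W /\ bdmc V /\ symmetrized_by_same_perm W V /\
    2 * mm_capacity W V <
      mm_capacity (polar_plus W) (polar_plus V) +
      mm_capacity (polar_minus W) (polar_minus V).
Proof.
exists bool, (@Wc R), (@Vc R).
split; first exact: bdmc_Wc.
split; first exact: bdmc_Vc.
split; first exact: sym.
have h1 := capWV R.
have h2 := @cap_ge0 R _ _ (polar_plus (@Vc R)) (bdmc_plus R).
have hm : bdmc (polar_minus (@Wc R)) by rewrite minusW; exact: bdmc_Wm.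
have h3 := @cap_ge R _ _ _ _ hm (achm R).
have l2 : 0 < ln (2 : R) by apply: ln_gt0; rewrite ltr1n.
exact (@fin_ineq R _ _ _ _ h1 h2 h3 l2).
Qed.
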